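(* For the GND game induced by the Shapley cost sharing mechanism, the function $$\Phi(p)=\sum_{e\in p}\sum_{i\in S_e} f_{i,e}\big(S_e^i(\psi_e)\cup\{i\}\big)$$ (where $S_e=\{i: e\in p_i\}$, $\psi_e$ is an arbitrary permutation of $S_e$, $S_e^i(\psi_e)$ is the set of players preceding $i$ in $\psi_e$, and $e \in p$ means $e\in\bigcup_i p_i$) satisfies $$\frac{1}{\lceil\max_j\alpha_j\rceil}\cdot C(p)\le\Phi(p)\le\mathcal{H}_N\cdot C(p)$$ for every strategy profile $p$, where $\mathcal{H}_N=\sum_{k=1}^N 1/k$.
   Context: GND instance: finite resource set $E$; players $i \in [N]$ with strategy collections $P_i \subseteq 2^E$ and weight vectors $w_i \in \mathbb{Z}_{\geq 1}^E$; constants $q\in\mathbb{Z}_{\ge1}$, $\alpha_1,\dots,\alpha_q > 1$; for each $e$, $\sigma_e \geq 0$, $\xi_{e,j} \geq 0$ (at least one positive), and $F_e(0)=0$, $F_e(l)=\sigma_e+\sum_j \xi_{e,j} l^{\alpha_j}$ for $l>0$. Profile $p=(p_1,\dots,p_N)$, $p_i\in P_i$; load $l_e^p=\sum_{i: e\in p_i} w_i(e)$; total cost $C(p)=\sum_e F_e(l_e^p)$. The Shapley cost share of $i\in X$ on $e$ when $X$ is the set of users of $e$ is $f_{i,e}(X)=\mathbb{E}\big[F_e\big(\sum_{i'\in X^i(\pi)}w_{i'}(e)+w_i(e)\big)-F_e\big(\sum_{i'\in X^i(\pi)}w_{i'}(e)\big)\big]$, where $\pi$ is a uniformly random permutation of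 $X$ and $X^i(\pi)$ is the set of players preceding $i$ in $\pi$. *)

(* Defs.v *)
From HB Require Import structures.
From mathcomp Require Import all_boot all_order all_algebra all_fingroup.
From mathcomp Require Import all_classical all_reals all_analysis.
Set Implicit Arguments. Unset Strict Implicit. Unset Printing Implicit Defensive.
Import Order.TTheory GRing.Theory Num.Theory.
Local Open Scope ring_scope.

Section GND.
Variables (R : realType) (E : finType) (N q : nat).
Variables (w : 'I_N -> E -> nat) (alpha : 'I_q -> R)
          (sigma : E -> R) (xi : E -> 'I_q -> R).

Definition Fcost (e : E) (l : nat) : R :=
  if l == 0%N then 0 else sigma e + \sum_(j < q) xi e j * (l%:R `^ alpha j).

Definition load_of (e : E) (Y : {set 'I_N}) : nat := \sum_(j in Y) w j e.

Definition preceding (s : seq 'I_N) (i : 'I_N) : {set 'I_N} :=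
  [set j in take (index i s) s].

Definition shapley (e : E) (i : 'I_N) (X : {set 'I_N}) : R :=
  (size (permutations (enum X)))%:R^-1 *
  \sum_(s <- permutations (enum X))
     (Fcost e (load_of e (preceding s i) + w i e)
      - Fcost e (load_of e (preceding s i))).

Definition users (p : 'I_N -> {set E}) (e : E) : {set 'I_N} :=
  [set i | e \in p i].

Definition load (p : 'I_N -> {set E}) (e : E) : nat := load_of e (users p e).

Definition total_cost (p : 'I_N -> {set E}) : R :=
  \sum_(e : E) Fcost e (load p e).

Definition Phi (p : 'I_N -> {set E}) (psi : E -> seq 'I_N) : R :=
  \sum_(e in \bigcup_(i < N) p i)
    \sum_(i in users p e) shapley e i (preceding (psi e) i :|: [set i]).

End GND.

Definition harmonic_number (R : realType) (n : nat) : R := \sum_(k < n) (k.+1%:R)^-1.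

(* Main.v *)
Require Import Defs.
From HB Require Import structures.
From mathcomp Require Import all_boot all_order all_algebra all_fingroup.
From mathcomp Require Import all_classical all_reals all_analysis.
From mathcomp Require Import ring lra.
Import Order.TTheory GRing.Theory Num.Theory.
Local Open Scope ring_scope.


Lemma sum_const_seq (R : nmodType) (T : Type) (r : seq T) (c : R) :
  \sum_(s <- r) c = c *+ size r.
Proof. by elim: r => [|x r IH]; rewrite ?big_nil ?big_cons ?IH ?mulrS. Qed.

Section Generic.
Variables (R : realType) (N : nat).
Variable v : {set 'I_N} -> R.
Variable m : 'I_N -> {set 'I_N} -> R.
Hypothesis v0 : v finset.set0 = 0.
Hypothesis hm : forall i (Y : {set 'I_N}), i \in Y -> m i (Y :\ i) = v Y - v (Y :\ i).

Definition Sh (i : 'I_N) (X : {set 'I_N}) : R :=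
  (size (permutations (enum X)))%:R^-1 *
  \sum_(s <- permutations (enum X)) m i (preceding s i).

Fixpoint Pf (n : nat) (Y : {set 'I_N}) : R :=
  if n is n'.+1 then (#|Y|%:R)^-1 * (v Y + \sum_(j in Y) Pf n' (Y :\ j)) else 0.

Definition Pot (Y : {set 'I_N}) := Pf #|Y| Y.

Lemma Pot0 : Pot finset.set0 = 0.
Proof. by rewrite /Pot cards0. Qed.

Lemma PotE (Y : {set 'I_N}) : #|Y|%:R * Pot Y = v Y + \sum_(j in Y) Pot (Y :\ j).
Proof.
rewrite /Pot; case E: #|Y| => [|n] /=.
  move/eqP: E; rewrite cards_eq0 => /eqP ->.
  by rewrite big_set0 v0 mul0r addr0.
idtac.
rewrite E mulrA divff ?mul1r ?pnatr_eq0 //.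
congr (_ + _); apply: eq_bigr => j hj.
by move: E; rewrite (cardsD1 j) hj add1n => -[->].
Qed.

Lemma perms_split (Y : {set 'I_N}) (G : seq 'I_N -> R) : Y != finset.set0 ->
  \sum_(s <- permutations (enum Y)) G s =
  \sum_(j in Y) \sum_(s <- permutations (enum (Y :\ j))) G (rcons s j).
Proof.
move=> Y0.
rewrite -big_enum /= -(big_allpairs_dep (h := fun j s => rcons s j)).
apply: perm_big; apply: uniq_perm.
- exact: permutations_uniq.
- apply: allpairs_uniq_dep; first exact: enum_uniq.
    by move=> x _; exact: permutations_uniq.
  move=> [a s] [b t] _ _ /= /rcons_inj [-> ->] //.
move=> s; rewrite mem_permutations; apply/idP/allpairsPdep.
- case/lastP: s => [|s j].
    move/perm_size; rewrite -cardE /= => /esym/eqP.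
    by rewrite cards_eq0 (negbTE Y0).
  move=> hp; have hu := perm_uniq hp; rewrite enum_uniq rcons_uniq in hu.
  case/andP: hu => js us.
  exists j, s; split => //.
    by rewrite -(perm_mem hp) mem_rcons mem_head.
  rewrite mem_permutations; apply: uniq_perm => //; first exact: enum_uniq.
  move=> x; have hx : (x \in Y) = (x \in rcons s j) by rewrite (perm_mem hp) mem_enum.
  rewrite mem_enum in_setD1 hx mem_rcons in_cons.
  by case: eqP => [->|] //=; rewrite (negbTE js).
- move=> [j [t [hj ht ->]]]; rewrite mem_permutations in ht.
  have ut : uniq t by rewrite (perm_uniq ht) enum_uniq.
  have jt : j \notin t by rewrite (perm_mem ht) mem_enum setD11.
  apply: uniq_perm; rewrite ?rcons_uniq ?jt ?enum_uniq //.
  move=> x; rewrite mem_rcons in_cons (perm_mem ht) !mem_enum in_setD1.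
  rewrite mem_enum in hj.
  by case: eqP => [->|].
Qed.


Lemma size_perms (X : {set 'I_N}) : size (permutations (enum X)) = (#|X|)`!.
Proof. by rewrite size_permutations ?enum_uniq // -cardE. Qed.

Lemma preceding_last (s : seq 'I_N) x : x \notin s ->
  preceding (rcons s x) x = [set y in s].
Proof.
move=> hx; rewrite /preceding -cats1 index_cat (negbTE hx) /= eqxx addn0.
by rewrite take_size_cat.
Qed.

Lemma preceding_rcons (s : seq 'I_N) x i : i \in s ->
  preceding (rcons s x) i = preceding s i.
Proof.
by move=> hi; rewrite /preceding -cats1 index_cat hi takel_cat // index_size.
Qed.

Lemma Sh_rec i (Y : {set 'I_N}) : i \in Y ->
  #|Y|%:R * Sh i Y = v Y - v (Y :\ i) + \sum_(j in Y :\ i) Sh i (Y :\ j).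
Proof.
move=> iY.
have Y0 : Y != finset.set0 by apply/set0Pn; exists i.
have [n En] : exists n, #|Y| = n.+1.
  by exists #|Y :\ i|; rewrite (cardsD1 i) iY.
have cj : forall j, j \in Y -> #|Y :\ j| = n.
  by move=> j hj; move: En; rewrite (cardsD1 j) hj add1n => -[->].
rewrite {1}/Sh perms_split // size_perms En (big_setD1 i) //=.
have -> : \sum_(s <- permutations (enum (Y :\ i))) m i (preceding (rcons s i) i)
    = (m i (Y :\ i)) *+ n`!.
  rewrite -(cj i iY) -size_perms -sum_const_seq.
  apply: eq_big_seq => s; rewrite mem_permutations => hs.
  rewrite preceding_last; last by rewrite (perm_mem hs) mem_enum setD11.
  congr (m i _); apply/setP => x; rewrite inE (perm_mem hs) mem_enum //.
have -> : \sum_(j in Y :\ i) \sum_(s <- permutations (enum (Y :\ j)))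
       m i (preceding (rcons s j) i)
    = \sum_(j in Y :\ i) (Sh i (Y :\ j)) *+ n`!.
  apply: eq_bigr => j; rewrite in_setD1 => /andP [ji jY].
  rewrite /Sh size_perms (cj j jY) -mulrnAl -(mulr_natr (n`!%:R^-1)) mulVf ?mul1r.
    apply: eq_big_seq => s; rewrite mem_permutations => hs.
    by rewrite preceding_rcons // (perm_mem hs) mem_enum in_setD1 eq_sym ji iY.
  by rewrite pnatr_eq0 -lt0n fact_gt0.
rewrite hm // sumrMnl -mulrnDl factS.
have f0 : n`!%:R != 0 :> R by rewrite pnatr_eq0 -lt0n fact_gt0.
have n0 : n.+1%:R != 0 :> R by rewrite pnatr_eq0.
rewrite natrM -mulr_natr; field.
by rewrite f0 addrC natr1.
Qed.

Lemma Pot_Sh n : forall (Y : {set 'I_N}) i, #|Y| = n -> i \in Y ->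
  Pot Y - Pot (Y :\ i) = Sh i Y.
Proof.
elim: n => [|n IH] Y i cY iY.
  by move/eqP: cY; rewrite cards_eq0 => /eqP cY; rewrite cY inE in iY.
have ci : #|Y :\ i| = n by move: cY; rewrite (cardsD1 i) iY add1n => -[].
have h1 := PotE Y; rewrite (big_setD1 i) //= in h1.
have h2 := PotE (Y :\ i).
have h3 := Sh_rec _ _ iY.
have h4 : \sum_(j in Y :\ i) Pot (Y :\ j) =
    \sum_(j in Y :\ i) Pot ((Y :\ i) :\ j) + \sum_(j in Y :\ i) Sh i (Y :\ j).
  rewrite -big_split; apply: eq_bigr => j; rewrite in_setD1 => /andP [ji jY].
  have cj : #|Y :\ j| = n by move: cY; rewrite (cardsD1 j) jY add1n => -[].
  rewrite -(IH (Y :\ j) i cj); last by rewrite in_setD1 eq_sym ji iY.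
  have -> : Y :\ j :\ i = Y :\ i :\ j by apply/setP => x; rewrite !inE andbCA.
  by rewrite /= addrC subrK.
rewrite h4 {h4} cY ci in h1 h2 h3.
apply: (mulfI (x := n.+1%:R)); first by rewrite pnatr_eq0.
rewrite mulrBr h1 h3 mulrSr mulrDl mul1r h2.
lra.
Qed.

Lemma Pot_tele (s : seq 'I_N) : uniq s ->
  \sum_(i <- s) Sh i (preceding s i :|: [set i]) = Pot [set x in s].
Proof.
elim/last_ind: s => [|s x IH].
  move=> _; rewrite big_nil; have -> : [set x in [::] : seq 'I_N] = finset.set0.
    by apply/setP => y; rewrite !inE.
  by rewrite Pot0.
rewrite rcons_uniq => /andP [xs us].
rewrite -cats1 big_cat big_seq1 /= cats1.
rewrite (eq_big_seq (fun i => Sh i (preceding s i :|: [set i]))); last first.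
  by move=> i hi; rewrite preceding_rcons.
rewrite IH // preceding_last //.
set Z := [set y in s].
have xZ : x \notin Z by rewrite inE.
have -> : [set y in rcons s x] = Z :|: [set x].
  by apply/setP => y; rewrite !inE mem_rcons in_cons orbC.
rewrite -(@Pot_Sh #|Z :|: [set x]|) //; last by rewrite !inE eqxx orbT.
have -> : (Z :|: [set x]) :\ x = Z.
  apply/setP => y; rewrite !inE; case: eqP => [->|_] /=;
  by rewrite ?(negbTE xs) ?(negbTE xZ) ?orbF.
by rewrite addrC subrK.
Qed.

Definition Hn (n : nat) : R := \sum_(k < n) (k.+1%:R)^-1.

Lemma Hn_ge0 n : 0 <= Hn n.
Proof. by apply: sumr_ge0 => k _; rewrite invr_ge0 ler0n. Qed.

Lemma HnS n : Hn n.+1 = Hn n + (n.+1%:R)^-1.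
Proof. by rewrite /Hn big_ord_recr. Qed.

Lemma Hn_mono k n : (k <= n)%N -> Hn k <= Hn n.
Proof.
elim: n => [|n IH] hmn; first by case: k hmn.
rewrite leq_eqVlt in hmn; case/orP: hmn => [/eqP->//|hmn].
rewrite HnS; apply: le_trans (IH hmn) _; by rewrite lerDl invr_ge0 ler0n.
Qed.

Lemma Pot_up (vge0 : forall Y, 0 <= v Y) (vmono : forall Y j, v (Y :\ j) <= v Y)
  n : forall Y : {set 'I_N}, #|Y| = n -> Pot Y <= Hn n * v Y.
Proof.
elim: n => [|n IH] Y cY.
  by move/eqP: cY; rewrite cards_eq0 => /eqP ->; rewrite Pot0 v0 mulr0.
have n0 : 0 < n.+1%:R :> R by rewrite ltr0n.
have hP := PotE Y; rewrite cY in hP.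
rewrite -(ler_pM2l n0) hP HnS.
have hs : \sum_(j in Y) Pot (Y :\ j) <= \sum_(j in Y) Hn n * v Y.
  apply: ler_sum => j jY.
  have cj : #|Y :\ j| = n by move: cY; rewrite (cardsD1 j) jY add1n => -[].
  apply: le_trans (IH _ cj) _; apply: ler_wpM2l; [exact: Hn_ge0 | exact: vmono].
rewrite sumr_const cY -mulr_natl in hs.
have e : n.+1%:R * ((Hn n + n.+1%:R^-1) * v Y) = v Y + n.+1%:R * (Hn n * v Y).
  by field; rewrite addrC natr1 pnatr_eq0.
rewrite e; lra.
Qed.

Lemma Pot_low d n : 0 < d ->
  (forall Y : {set 'I_N}, #|Y|%:R * v Y <= d * v Y + \sum_(j in Y) v (Y :\ j)) ->
  forall Y : {set 'I_N}, #|Y| = n -> v Y / d <= Pot Y.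
Proof.
move=> d0 hl; elim: n => [|n IH] Y cY.
  by move/eqP: cY; rewrite cards_eq0 => /eqP ->; rewrite Pot0 v0 mul0r.
have n0 : 0 < n.+1%:R :> R by rewrite ltr0n.
have hP := PotE Y; rewrite cY in hP.
rewrite -(ler_pM2l n0) hP.
have hs : \sum_(j in Y) v (Y :\ j) / d <= \sum_(j in Y) Pot (Y :\ j).
  apply: ler_sum => j jY.
  have cj : #|Y :\ j| = n by move: cY; rewrite (cardsD1 j) jY add1n => -[].
  exact: IH.
rewrite -mulr_suml in hs.
have di : 0 <= d^-1 by rewrite invr_ge0 ltW.
have h := ler_wpM2r di (hl Y).
rewrite mulrDl (mulrC d) mulfK ?gt_eqF // in h.
rewrite cY in h; rewrite mulrA.
apply: le_trans h _; lra.
Qed.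

End Generic.


Lemma bern (R : realType) (a x y : R) : 1 < a -> 0 <= x -> 0 <= y ->
  y `^ a - a * (y - x) * y `^ (a - 1) <= x `^ a.
Proof.
move=> a1 hx hy.
have a0 : 0 < a by apply: lt_trans a1.
have b0 : 0 < a - 1 by rewrite subr_gt0.
have q0 : 0 < a / (a - 1) by rewrite divr_gt0.
have pq : a^-1 + (a / (a - 1))^-1 = 1.
  by rewrite invf_div; field; rewrite gt_eqF.
have Yg := conjugate_powR hx (powR_ge0 y (a - 1)) a0 q0 pq.
rewrite -powRrM in Yg.
have e : (a - 1) * (a / (a - 1)) = a by field; rewrite gt_eqF.
rewrite e in Yg.
have hZ : y * y `^ (a - 1) = y `^ a by rewrite mulr_powRB1.
have h : a * (x * y `^ (a - 1)) <= x `^ a + (a - 1) * y `^ a.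
  have := ler_wpM2l (ltW a0) Yg.
  have -> : a * (x `^ a / a + y `^ a / (a / (a - 1))) = x `^ a + (a - 1) * y `^ a.
    by field; rewrite !gt_eqF.
  by [].
have e2 : y `^ a - a * (y - x) * y `^ (a - 1) =
  y `^ a - a * y `^ a + a * (x * y `^ (a - 1)) by rewrite -hZ; ring.
rewrite e2; rewrite mulrBl mul1r in h; lra.
Qed.

Section Conc.
Variables (R : realType) (E : finType) (N q : nat).
Variables (w : 'I_N -> E -> nat) (alpha : 'I_q -> R)
          (sigma : E -> R) (xi : E -> 'I_q -> R).
Hypothesis hw : forall i e, (1 <= w i e)%N.
Hypothesis halpha : forall j, 1 < alpha j.
Hypothesis hsigma : forall e, 0 <= sigma e.
Hypothesis hxi : forall e j, 0 <= xi e j.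

Definition vE e (T : {set 'I_N}) := Fcost alpha sigma xi e (load_of w e T).
Definition mE e i (T : {set 'I_N}) :=
  Fcost alpha sigma xi e (load_of w e T + w i e) - Fcost alpha sigma xi e (load_of w e T).

Lemma shapleyE e i X : shapley w alpha sigma xi e i X = Sh R N (mE e) i X.
Proof. by []. Qed.

Lemma Fcost_ge0 e l : 0 <= Fcost alpha sigma xi e l.
Proof.
rewrite /Fcost; case: eqP => // _; apply: addr_ge0 => //.
by apply: sumr_ge0 => k _; rewrite mulr_ge0 ?powR_ge0.
Qed.

Lemma Fcost_mono e l l' : (l <= l')%N ->
  Fcost alpha sigma xi e l <= Fcost alpha sigma xi e l'.
Proof.
move=> hl; rewrite {1}/Fcost; case: eqP => [_|/eqP l0]; first exact: Fcost_ge0.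
have l'0 : l' != 0%N by rewrite -lt0n (leq_trans _ hl) // lt0n.
rewrite /Fcost (negbTE l'0) lerD2l; apply: ler_sum => k _.
apply: ler_wpM2l => //; apply: ge0_ler_powR.
- by apply: ltW; apply: lt_trans (halpha k).
- by rewrite nnegrE ler0n.
- by rewrite nnegrE ler0n.
- by rewrite ler_nat.
Qed.

Lemma load_D1 e (Y : {set 'I_N}) i : i \in Y ->
  load_of w e Y = (load_of w e (Y :\ i) + w i e)%N.
Proof. by move=> iY; rewrite /load_of (big_setD1 i) //= addnC. Qed.

Lemma load_pos e (Y : {set 'I_N}) : Y != finset.set0 -> (0 < load_of w e Y)%N.
Proof.
case/set0Pn => i iY; rewrite (load_D1 e _ _ iY).
by apply: leq_trans (hw i e) _; rewrite leq_addl.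
Qed.

Lemma vE0 e : vE e finset.set0 = 0.
Proof. by rewrite /vE /load_of big_set0. Qed.

Lemma hmE e i (Y : {set 'I_N}) : i \in Y -> mE e i (Y :\ i) = vE e Y - vE e (Y :\ i).
Proof. by move=> iY; rewrite /mE /vE -load_D1. Qed.

Lemma vE_ge0 e Y : 0 <= vE e Y.
Proof. exact: Fcost_ge0. Qed.

Lemma vE_mono e Y j : vE e (Y :\ j) <= vE e Y.
Proof.
apply: Fcost_mono; case: (boolP (j \in Y)) => jY.
  by rewrite (load_D1 e _ _ jY) leq_addr.
have -> : Y :\ j = Y.
  by apply/setP => x; rewrite !inE; case: eqP => // ->; rewrite (negbTE jY).
by [].
Qed.

Lemma sum_pow_lb e (Y : {set 'I_N}) (a : R) : 1 < a ->
  #|Y|%:R * ((load_of w e Y)%:R) `^ a - a * ((load_of w e Y)%:R) `^ a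
  <= \sum_(j in Y) ((load_of w e Y)%:R - (w j e)%:R) `^ a.
Proof.
move=> a1; set Lr : R := (load_of w e Y)%:R.
have a0 : 0 < a by apply: lt_trans a1.
apply: le_trans (ler_sum _ (fun j (hj : j \in Y) =>
   @bern R a (Lr - (w j e)%:R) Lr a1 _ (ler0n _ _))); last first.
  by move=> j hj; rewrite subr_ge0 /Lr (load_D1 e _ _ hj) ler_nat leq_addl.
rewrite sumrB sumr_const -[Lr `^ a *+ _]mulr_natl lerD2l lerN2.
have -> : \sum_(i in Y) a * (Lr - (Lr - (w i e)%:R)) * Lr `^ (a - 1)
   = a * (\sum_(i in Y) (w i e)%:R) * Lr `^ (a - 1).
  by rewrite mulr_sumr mulr_suml; apply: eq_bigr => j _; congr (_ * _ * _); ring.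
by rewrite -natr_sum -/(load_of w e Y) -/Lr -mulrA mulr_powRB1 // ler0n.
Qed.

Lemma hlowE e (d : R) : (forall k, alpha k <= d) -> 1 <= d ->
  forall Y : {set 'I_N}, #|Y|%:R * vE e Y <= d * vE e Y + \sum_(j in Y) vE e (Y :\ j).
Proof.
move=> hal d1 Y.
have S0 : 0 <= \sum_(j in Y) vE e (Y :\ j) by apply: sumr_ge0 => j _; exact: vE_ge0.
have V0 := vE_ge0 e Y.
case: (leqP #|Y| 1) => hY.
  have : #|Y|%:R * vE e Y <= d * vE e Y.
    apply: ler_wpM2r => //; apply: le_trans d1.
    by have : (#|Y|%:R : R) <= 1%:R by rewrite ler_nat.
  lra.
set L := load_of w e Y.
have L0 : L != 0%N.
  by rewrite -lt0n load_pos // -card_gt0 (ltn_trans _ hY).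
set Lr : R := L%:R.
have eY : vE e Y = sigma e + \sum_k xi e k * Lr `^ alpha k.
  by rewrite /vE /Fcost -/L (negbTE L0).
have eYj : \sum_(j in Y) vE e (Y :\ j) =
    \sum_(j in Y) (sigma e + \sum_k xi e k * (Lr - (w j e)%:R) `^ alpha k).
  apply: eq_bigr => j jY.
  have Lj : load_of w e (Y :\ j) != 0%N.
    rewrite -lt0n load_pos // -card_gt0.
    by move: hY; rewrite (cardsD1 j) jY add1n ltnS.
  rewrite /vE /Fcost (negbTE Lj); congr (_ + _); apply: eq_bigr => k _.
  by rewrite /Lr /L (load_D1 e _ _ jY) natrD addrK.
have key : forall k, #|Y|%:R * Lr `^ alpha k <=
    d * Lr `^ alpha k + \sum_(j in Y) (Lr - (w j e)%:R) `^ alpha k.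
  move=> k; have h := @sum_pow_lb e Y (alpha k) (halpha k); rewrite -/L -/Lr in h.
  have : alpha k * Lr `^ alpha k <= d * Lr `^ alpha k.
    by apply: ler_wpM2r; rewrite ?powR_ge0.
  lra.
rewrite eYj big_split /= sumr_const exchange_big /= eY.
rewrite mulrDr mulrDr !mulr_sumr -[sigma e *+ _]mulr_natl.
have hs : \sum_k #|Y|%:R * (xi e k * Lr `^ alpha k) <=
   \sum_k (d * (xi e k * Lr `^ alpha k) + \sum_(j in Y) xi e k * (Lr - (w j e)%:R) `^ alpha k).
  apply: ler_sum => k _.
  rewrite -mulr_sumr mulrCA (mulrCA d) -mulrDr; apply: ler_wpM2l => //; exact: key.
rewrite big_split /= in hs.
have : 0 <= d * sigma e by rewrite mulr_ge0 // (le_trans ler01 d1).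
lra.
Qed.

End Conc.


Theorem theorem7p2 (R : realType) (E : finType) (N : nat)
  (P : 'I_N -> {set {set E}}) (w : 'I_N -> E -> nat)
  (q : nat) (alpha : 'I_q -> R) (sigma : E -> R) (xi : E -> 'I_q -> R)
  (hw : forall i e, (1 <= w i e)%N)
  (hq : (1 <= q)%N)
  (halpha : forall j, 1 < alpha j)
  (hsigma : forall e, 0 <= sigma e)
  (hxi : forall e j, 0 <= xi e j)
  (hxipos : forall e, exists j, 0 < xi e j)
  (p : 'I_N -> {set E}) (hp : forall i, p i \in P i)
  (psi : E -> seq 'I_N)
  (hpsi : forall e, perm_eq (psi e) (enum (users p e))) :
  let amax := \big[Num.max/0]_(j < q) alpha j in
  let C := total_cost w alpha sigma xi p in
  let Ph := Phi w alpha sigma xi p psi in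
  ((Num.ceil amax)%:~R)^-1 * C <= Ph /\ Ph <= harmonic_number R N * C.
Proof.
move=> amax C Ph.
set d : R := (Num.ceil amax)%:~R.
have hal : forall k, alpha k <= d.
  move=> k; apply: le_trans (ceil_ge _).
  exact: (le_bigmax (0 : R) alpha k).
have d1 : 1 <= d.
  by apply: ltW; apply: lt_le_trans (halpha (Ordinal hq)) (hal _).
have d0 : 0 < d by apply: lt_le_trans d1.
set U := \bigcup_(i < N) p i.
set v := vE R E N q w alpha sigma xi.
set Pt := fun e => Pot R N (v e) (users p e).
have ePh : Ph = \sum_(e in U) Pt e.
  rewrite /Ph /Phi; apply: eq_bigr => e _.
  rewrite -big_enum /= -(perm_big _ (hpsi e)) /=.
  under eq_bigr => i _ do rewrite shapleyE.
  rewrite (Pot_tele R N (v e) _ (vE0 _ _ _ _ _ _ _ _ e) (hmE _ _ _ _ _ _ _ _ e)).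
    rewrite /Pt; congr (Pot _ _ _ _); apply/setP => x.
    by rewrite inE (perm_mem (hpsi e)) mem_enum.
  by rewrite (perm_uniq (hpsi e)) enum_uniq.
have eC : C = \sum_(e in U) v e (users p e).
  rewrite /C /total_cost (bigID (mem U)) /= addrC big1 ?add0r //.
  move=> e he; rewrite /load.
  have -> : users p e = finset.set0.
    apply/setP => i; rewrite !inE; apply/negbTE; apply: contra he => hi.
    by apply/bigcupP; exists i.
  by rewrite /load_of big_set0.
split.
  rewrite ePh eC mulr_sumr; apply: ler_sum => e _.
  rewrite mulrC.
  apply: (Pot_low R N (v e) (vE0 _ _ _ _ _ _ _ _ e) d #|users p e| d0) => //.
  exact: hlowE.
rewrite ePh eC mulr_sumr; apply: ler_sum => e _.
apply: le_trans (Pot_up R N (v e) (vE0 _ _ _ _ _ _ _ _ e) _ _ #|users p e| _ erefl) _.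
- exact: vE_ge0.
- exact: vE_mono.
apply: ler_wpM2r; first exact: vE_ge0.
apply: Hn_mono; apply: leq_trans (max_card _) _; by rewrite card_ord.
Qed.
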